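(* Let $\mathcal{N}$ be a ReLU network with widths $n_0,\dots,n_L$ and let $X=[x^{(1)},\dots,x^{(m)}]\in\mathbb{R}^{n_0\times m}$ be a fixed dataset whose $m$ columns are affinely independent. Fix an activation pattern $A$ and let $\mathbf{A}=[A,\dots,A]$ (all points assigned the pattern $A$). Let $n^A_\ell=|\{i: A^\ell_i=1\}|$. Then the image $\{F^{\mathbf{A}}_X(\theta):\theta\in\mathbb{R}^{d_{\operatorname{par}}}\}\subseteq\mathbb{R}^{n_L\times m}$ coincides with the image $\{G_X(\theta'):\theta'\}$ of the fully connected linear network $\mathcal{L}$ with widths $n_0,n_1^A,\dots,n^A_{L-1},n_L$.
   Context: A ReLU network with widths $n_0,\dots,n_L$ has parameters $\theta=(W^{(\ell)},b^{(\ell)})_{\ell=1}^L$ with $W^{(\ell)}\in\mathbb{R}^{n_\ell\times n_{\ell-1}}$, $b^{(\ell)}\in\mathbb{R}^{n_\ell}$. An activation pattern is $A=(A^1,\dots,A^{L-1})$ with $A^\ell\in\{0,1\}^{n_\ell}$. For such $A$, $f^A_\theta(x)=W^{(L)}\big(W^{(L-1)}_A(\cdots(W^{(1)}_Ax+b^{(1)}_A)\cdots)+b^{(L-1)}_A\big)+b^{(L)}$ where $W^{(\ell)}_A=\operatorname{diag}(A^\ell)W^{(\ell)}$, $b^{(\ell)}_A=\operatorname{diag}(A^\ell)b^{(\ell)}$, and $F^{\mathbf{A}}_X(\theta)=[f^A_\theta(x^{(1)}),\dots,f^A_\theta(x^{(m)})]$. The fully connected linear network with widths $k_0,\dots,k_L$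 has parameters $\theta'=(V^{(\ell)},c^{(\ell)})$, $V^{(\ell)}\in\mathbb{R}^{k_\ell\times k_{\ell-1}}$, $c^{(\ell)}\in\mathbb{R}^{k_\ell}$, and computes $h_{\theta'}(x)=V^{(L)}(\cdots(V^{(1)}x+c^{(1)})\cdots)+c^{(L)}$; $G_X(\theta')=[h_{\theta'}(x^{(1)}),\dots,h_{\theta'}(x^{(m)})]$. *)

(* Defs.v *)
From mathcomp Require Import all_boot all_order all_algebra.
From mathcomp Require Import reals.
Set Implicit Arguments. Unset Strict Implicit. Unset Printing Implicit Defensive.
Import Order.TTheory GRing.Theory Num.Theory.
Local Open Scope ring_scope.

(* Layers are 0-indexed in the parameter families: layer l+1 of the paper
   has weight W l : 'M_(w l.+1, w l) and bias b l : 'cV_(w l.+1).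
   Widths: w 0 = n_0, ..., w L = n_L.  Only l < L is ever used. *)

(* diag(A^l) for an activation pattern given as the set {i | A^l_i = 1} *)
Definition pat_mx (R : nzRingType) n (S : {set 'I_n}) : 'M[R]_n :=
  diag_mx (\row_i (i \in S)%:R).

Section Nets.
Variable R : nzRingType.
Variable w : nat -> nat.
Variable W : forall l, 'M[R]_(w l.+1, w l).
Variable b : forall l, 'cV[R]_(w l.+1).

(* hidden state of the pattern-fixed ReLU network after k layers
   (the masks diag(A^1),...,diag(A^k) applied) *)
Fixpoint pat_hid (A : forall l, {set 'I_(w l)}) (x : 'cV[R]_(w 0)) (k : nat)
  : 'cV[R]_(w k) :=
  match k with
  | 0 => x
  | k'.+1 => @pat_mx R _ (A k'.+1) *m (W k' *m pat_hid A x k' + b k')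
  end.

(* f^A_theta(x) for an L-layer network (output layer has no mask) *)
Definition relu_fA (L : nat) (A : forall l, {set 'I_(w l)}) (x : 'cV[R]_(w 0))
  : 'cV[R]_(w L) :=
  match L return 'cV[R]_(w L) with
  | 0 => x
  | L'.+1 => W L' *m pat_hid A x L' + b L'
  end.

Definition relu_FA (L : nat) (A : forall l, {set 'I_(w l)}) m (X : 'M[R]_(w 0, m))
  : 'M[R]_(w L, m) :=
  \matrix_(i, j) relu_fA L A (col j X) i 0.

Fixpoint lin_hid (x : 'cV[R]_(w 0)) (k : nat) : 'cV[R]_(w k) :=
  match k with
  | 0 => x
  | k'.+1 => W k' *m lin_hid x k' + b k'
  end.

Definition lin_h (L : nat) (x : 'cV[R]_(w 0)) : 'cV[R]_(w L) := lin_hid x L.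

Definition lin_G (L : nat) m (X : 'M[R]_(w 0, m)) : 'M[R]_(w L, m) :=
  \matrix_(i, j) lin_h L (col j X) i 0.
End Nets.

Definition affinely_independent (R : nzRingType) n m (X : 'M[R]_(n, m)) : Prop :=
  forall c : 'cV[R]_m, \sum_j c j 0 = 0 -> X *m c = 0 -> c = 0.

(* Main.v *)
Require Import Defs.
From mathcomp Require Import all_boot all_order all_algebra.
From mathcomp Require Import reals.
Import GRing.Theory Num.Theory.
Local Open Scope ring_scope.

Definition selmx (R : nzRingType) n k (S : {set 'I_n}) : 'M[R]_(k, n) :=
  \matrix_(i, j) ((j \in S) && (index j (enum S) == i))%:R.

Arguments selmx R {n} k S.

Lemma selmx_tr_entry (R : nzRingType) n k (S : {set 'I_n}) (i : 'I_k) j :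
  selmx R k S i j = ((j \in S) && (index j (enum S) == i))%:R.
Proof. by rewrite mxE. Qed.

Lemma selmx_PPt (R : nzRingType) n k (S : {set 'I_n}) :
  k = #|S| -> selmx R k S *m (selmx R k S)^T = 1%:M.
Proof.
move=> ek; apply/matrixP => i i'; rewrite !mxE.
have ilt : (i < size (enum S))%N by rewrite -cardE -ek.
have iltn : (i < n)%N.
  by apply: (leq_trans ilt); rewrite -cardE -[X in (_ <= X)%N]card_ord max_card.
pose x0 := Ordinal iltn.
pose j0 := nth x0 (enum S) i.
clearbody x0.
have j0S : j0 \in S by rewrite -mem_enum mem_nth.
have j0i : index j0 (enum S) = i by rewrite index_uniq ?enum_uniq.
rewrite (bigD1 j0) //= big1 ?addr0.
  rewrite !mxE j0S j0i eqxx /= mul1r.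
  by [].
move=> j jne; rewrite !mxE.
case jS: (j \in S) => //=; last by rewrite mul0r.
case: eqP => ji; last by rewrite mul0r.
exfalso; move/eqP: jne; apply; by rewrite /j0 -ji nth_index // mem_enum jS.
Qed.

Lemma selmx_PtP (R : nzRingType) n k (S : {set 'I_n}) :
  k = #|S| -> (selmx R k S)^T *m selmx R k S = pat_mx R S.
Proof.
move=> ek; apply/matrixP => j j'; rewrite /pat_mx !mxE.
case jS: (j \in S); last first.
  by rewrite mul0rn big1 // => i _; rewrite !mxE jS mul0r.
have ilt : (index j (enum S) < k)%N by rewrite ek cardE index_mem mem_enum.
rewrite (bigD1 (Ordinal ilt)) //= big1 ?addr0; last first.
  move=> i ne; rewrite !mxE jS /=.
  case: eqP => e; last by rewrite mul0r.
  by exfalso; move/eqP: ne; apply; apply: val_inj.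
rewrite !mxE jS eqxx mul1r /= mulr1n.
case: (j =P j') => [<-|ne]; first by rewrite jS eqxx.
case j'S: (j' \in S) => //=.
case: eqP => // e; exfalso; apply: ne.
have jE : j \in enum S by rewrite mem_enum.
have j'E : j' \in enum S by rewrite mem_enum.
by rewrite -(nth_index j jE) -e nth_index.
Qed.

Lemma selmxT_entry (R : nzRingType) n k (S : {set 'I_n}) (hS : forall j, j \in S)
   (i : 'I_k) (j : 'I_n) :
  selmx R k S i j = (i == j :> nat)%:R.
Proof.
rewrite mxE hS.
have -> : enum S = enum 'I_n by apply: eq_enum => x; rewrite hS.
by rewrite index_enum_ord eq_sym.
Qed.


Lemma castmx_selL (R : nzRingType) n k m (S : {set 'I_n}) (hS : forall j, j \in S)
  (e : k = n) (X : 'M[R]_(n, m)) :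
  castmx (esym e, erefl m) X = selmx R k S *m X.
Proof.
apply/matrixP => i j; rewrite castmxE mxE.
rewrite (eq_bigr (fun r : 'I_n => (i == r :> nat)%:R * X r j)); last first.
  by move=> r _; congr (_ * _); exact: selmxT_entry.
rewrite (bigD1 (cast_ord (esym (esym e)) i)) //= eqxx mul1r big1 ?addr0 ?cast_ord_id //.
move=> r ne; case: eqP; rewrite ?mul0r // => h.
by exfalso; move/eqP: ne; apply; apply: val_inj; rewrite /= h.
Qed.

Lemma castmx_selR (R : nzRingType) n k m (S : {set 'I_n}) (hS : forall j, j \in S)
  (e : k = n) (M : 'M[R]_(k, m)) :
  castmx (e, erefl m) M = (selmx R k S)^T *m M.
Proof.
apply/matrixP => i j; rewrite castmxE mxE.
rewrite (eq_bigr (fun r : 'I_k => (r == i :> nat)%:R * M r j)); last first.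
  by move=> r _; rewrite mxE; congr (_ * _); exact: selmxT_entry.
rewrite (bigD1 (cast_ord (esym e) i)) //= eqxx mul1r big1 ?addr0 ?cast_ord_id //.
move=> r ne; case: eqP; rewrite ?mul0r // => h.
by exfalso; move/eqP: ne; apply; apply: val_inj; rewrite /= h.
Qed.

Lemma col_mulmx (R : nzRingType) a b m (P : 'M[R]_(a, b)) (X : 'M[R]_(b, m)) j :
  col j (P *m X) = P *m col j X.
Proof. by apply/matrixP => i z; rewrite !mxE; apply: eq_bigr => r _; rewrite !mxE. Qed.

Lemma pat_mxT (R : nzRingType) n (S : {set 'I_n}) : (forall j, j \in S) -> pat_mx R S = 1%:M.
Proof. by move=> hS; apply/matrixP => i j; rewrite !mxE hS. Qed.

Section Core.
Variable R : nzRingType.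
Variables (w k : nat -> nat) (L : nat).
Variable A : forall l, {set 'I_(w l)}.
Variable S : forall l, {set 'I_(w l)}.
Let P l : 'M[R]_(k l, w l) := selmx R (k l) (S l).
Hypothesis hP0 : (P 0)^T *m P 0 = 1%:M.
Hypothesis hPPt : forall l, (l < L)%N -> P l *m (P l)^T = 1%:M.
Hypothesis hPtP : forall l, (0 < l < L)%N -> (P l)^T *m P l = pat_mx R (A l).

Lemma fwd_hid (W : forall l, 'M[R]_(w l.+1, w l)) (b : forall l, 'cV[R]_(w l.+1)) x :
  forall l, (l < L)%N ->
  pat_hid W b A x l =
  (P l)^T *m lin_hid (fun l => P l.+1 *m W l *m (P l)^T) (fun l => P l.+1 *m b l) (P 0 *m x) l.
Proof.
elim=> [|l IH] hl /=; first by rewrite mulmxA hP0 mul1mx.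
rewrite IH ?(ltnW hl) // -hPtP //.
by rewrite !mulmxDr !mulmxA.
Qed.

Lemma fwd_out (W : forall l, 'M[R]_(w l.+1, w l)) (b : forall l, 'cV[R]_(w l.+1)) x L' :
  (L' < L)%N ->
  lin_h (fun l => P l.+1 *m W l *m (P l)^T) (fun l => P l.+1 *m b l) L'.+1 (P 0 *m x) =
  P L'.+1 *m relu_fA W b L'.+1 A x.
Proof.
move=> hL; rewrite /lin_h /= fwd_hid //.
by rewrite !mulmxDr !mulmxA.
Qed.

Lemma bwd_hid (V : forall l, 'M[R]_(k l.+1, k l)) (c : forall l, 'cV[R]_(k l.+1)) x :
  forall l, (l < L)%N ->
  pat_hid (fun l => (P l.+1)^T *m V l *m P l) (fun l => (P l.+1)^T *m c l) A x l =
  (P l)^T *m lin_hid V c (P 0 *m x) l.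
Proof.
elim=> [|l IH] hl /=; first by rewrite mulmxA hP0 mul1mx.
rewrite IH ?(ltnW hl) //.
have E1 : (P l.+1)^T *m V l *m P l *m ((P l)^T *m lin_hid V c (P 0 *m x) l)
   = (P l.+1)^T *m (V l *m lin_hid V c (P 0 *m x) l).
  by rewrite !mulmxA -(mulmxA _ (P l)) hPPt ?(ltnW hl) // mulmx1.
rewrite E1 -mulmxDr -hPtP // -mulmxA (mulmxA (P l.+1)) hPPt // mul1mx.
done.
Qed.

Lemma bwd_out (V : forall l, 'M[R]_(k l.+1, k l)) (c : forall l, 'cV[R]_(k l.+1)) x L' :
  (L' < L)%N ->
  relu_fA (fun l => (P l.+1)^T *m V l *m P l) (fun l => (P l.+1)^T *m c l) L'.+1 A x =
  (P L'.+1)^T *m lin_h V c L'.+1 (P 0 *m x).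
Proof.
move=> hL; rewrite /lin_h /= bwd_hid //.
by rewrite !mulmxA -(mulmxA _ (P L')) hPPt // mulmx1 mulmxDr !mulmxA.
Qed.
End Core.

Theorem lemma2p3 (R : realType) (L : nat) (w : nat -> nat) (m : nat)
    (X : 'M[R]_(w 0, m)) (A : forall l, {set 'I_(w l)})
    (k : nat -> nat) (ek0 : k 0 = w 0) (ekL : k L = w L) :
  (0 < L)%N ->
  affinely_independent X ->
  (forall l, (0 < l < L)%N -> k l = #|A l|) ->
  forall Y : 'M[R]_(w L, m),
    (exists (W : forall l, 'M[R]_(w l.+1, w l)) (b : forall l, 'cV[R]_(w l.+1)),
        relu_FA W b L A X = Y)
    <->
    (exists (V : forall l, 'M[R]_(k l.+1, k l)) (c : forall l, 'cV[R]_(k l.+1)),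
        castmx (ekL, erefl m) (lin_G V c L (castmx (esym ek0, erefl m) X)) = Y).
Proof.
move=> L0 _ hk Y.
pose S := fun l => if (0 < l < L)%N then A l else [set: 'I_(w l)].
have hS0 : forall j, j \in S 0 by move=> j; rewrite /S /= in_setT.
have hSL : forall j, j \in S L by move=> j; rewrite /S ltnn andbF in_setT.
have hk' : forall l, (l <= L)%N -> k l = #|S l|.
  move=> l; rewrite leq_eqVlt => /orP [/eqP ->|hl].
    by rewrite ekL /S ltnn andbF cardsT card_ord.
  case: l hl => [|l] hl; first by rewrite ek0 /S /= cardsT card_ord.
  by rewrite /S /= hl hk //= hl.
have hPPt : forall l, (l < L)%N -> selmx R (k l) (S l) *m (selmx R (k l) (S l))^T = 1%:M.
  by move=> l hl; apply: selmx_PPt; apply: hk'; apply: ltnW.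
have hPtP : forall l, (0 < l < L)%N ->
    (selmx R (k l) (S l))^T *m selmx R (k l) (S l) = pat_mx R (A l).
  by move=> l hl; rewrite selmx_PtP ?hk' /S ?hl //; case/andP: hl => _ /ltnW.
have hP0 : (selmx R (k 0) (S 0))^T *m selmx R (k 0) (S 0) = 1%:M.
  by rewrite selmx_PtP ?hk' // pat_mxT.
have hPL : (selmx R (k L) (S L))^T *m selmx R (k L) (S L) = 1%:M.
  by rewrite selmx_PtP ?hk' // pat_mxT.
case: L ekL L0 hk S hS0 hSL hk' hPPt hPtP hP0 hPL Y => [//|L'] ekL _ hk S hS0 hSL hk' hPPt hPtP hP0 hPL Y.
split.
- case=> W [b <-].
  exists (fun l => selmx R (k l.+1) (S l.+1) *m W l *m (selmx R (k l) (S l))^T).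
  exists (fun l => selmx R (k l.+1) (S l.+1) *m b l).
  rewrite (castmx_selL _ _ _ _ _ hS0 ek0).
  have -> : lin_G (fun l => selmx R (k l.+1) (S l.+1) *m W l *m (selmx R (k l) (S l))^T)
      (fun l => selmx R (k l.+1) (S l.+1) *m b l) L'.+1 (selmx R (k 0) (S 0) *m X)
      = selmx R (k L'.+1) (S L'.+1) *m relu_FA W b L'.+1 A X.
    apply/matrixP => i j; rewrite mxE col_mulmx.
    rewrite (@fwd_out R w k L'.+1 A S hP0 hPtP) // !mxE; apply: eq_bigr => r _.
    rewrite /relu_FA; congr (_ * _); by rewrite [in RHS]mxE.
  apply: etrans (castmx_selR _ _ _ _ _ hSL ekL _) _.
  by rewrite mulmxA hPL mul1mx.
- case=> V [c <-].
  exists (fun l => (selmx R (k l.+1) (S l.+1))^T *m V l *m selmx R (k l) (S l)).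
  exists (fun l => (selmx R (k l.+1) (S l.+1))^T *m c l).
  rewrite (castmx_selL _ _ _ _ _ hS0 ek0).
  symmetry; apply: etrans (castmx_selR _ _ _ _ _ hSL ekL _) _; symmetry.
  apply/matrixP => i j; rewrite /relu_FA [LHS]mxE.
  rewrite (@bwd_out R w k L'.+1 A S hP0 hPPt hPtP) //.
  rewrite [LHS]mxE [RHS]mxE; apply: eq_bigr => r _; congr (_ * _).
  by rewrite /lin_G [in RHS]mxE col_mulmx.
Qed.
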